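(* Let $(r_t)_{t\ge0}$ and $(\delta_t)_{t\ge0}$ be sequences of non-negative real numbers, and let $g>1$ and $N\ge0$. Suppose that $r_t\le g\,\delta_t-\delta_{t+1}+N$ for all $t\ge0$. Then for every $T\ge1$, $$\min_{0\le t\le T-1}r_t\le\frac{g^T}{T}\delta_0+N.$$ *)

(* Defs.v *)
From mathcomp Require Import all_boot all_order all_algebra.
Set Implicit Arguments. Unset Strict Implicit. Unset Printing Implicit Defensive.

(* Main.v *)
Require Import Defs.
From mathcomp Require Import all_boot all_order all_algebra.
From mathcomp Require Import ring lra.
Import Order.TTheory GRing.Theory Num.Theory.
Local Open Scope ring_scope.

Fixpoint Ssum (R : realFieldType) (g : R) (n : nat) : R :=
  if n is k.+1 then g * @Ssum R g k + 1 else 0.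
Arguments Ssum {R} g n.

Theorem lemmaA8 (R : realFieldType) (r delta : nat -> R) (g N : R)
  (hr : forall t, 0 <= r t) (hd : forall t, 0 <= delta t)
  (hg : 1 < g) (hN : 0 <= N)
  (hrec : forall t, r t <= g * delta t - delta t.+1 + N)
  (T : nat) (hT : (1 <= T)%N) :
  \big[Num.min/r 0%N]_(t < T) r t <= g ^+ T / T%:R * delta 0%N + N.
Proof.
set m := \big[Num.min/r 0%N]_(t < T) r t.
have hm : forall t, (t < T)%N -> m <= r t.
  move=> t ht; rewrite /m (bigD1 (Ordinal ht)) //= ge_min lexx //.
have Spos : forall n, 0 <= Ssum g n.
  elim=> [|n IH] /=; first by [].
  have : 0 <= g * Ssum g n by apply: mulr_ge0 => //; lra.
  lra.
have Sge : forall n, n%:R <= Ssum g n.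
  elim=> [|n IH] /=; first by [].
  rewrite -natr1.
  have : Ssum g n <= g * Ssum g n.
    by rewrite ler_peMl //; try exact: Spos; lra.
  lra.
have key : forall n, (n <= T)%N ->
    m * Ssum g n + delta n <= g ^+ n * delta 0%N + N * Ssum g n.
  elim=> [|n IH] hn /=; first by rewrite mulr0 add0r expr0 mul1r mulr0 addr0.
  have h1 := IH (ltnW hn).
  have h2 := hm n hn.
  have h3 := hrec n.
  rewrite exprS.
  have h4 : g * (m * Ssum g n + delta n) <= g * (g ^+ n * delta 0%N + N * Ssum g n).
    by rewrite ler_pM2l //; lra.
  have E1 : m * (g * Ssum g n + 1) + delta n.+1 = g * (m * Ssum g n + delta n) + m + delta n.+1 - g * delta n by ring.
  have E2 : g * g ^+ n * delta 0%N + N * (g * Ssum g n + 1) = g * (g ^+ n * delta 0%N + N * Ssum g n) + N by ring.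
  rewrite E1 E2; lra.
have hk := key T (leqnn T).
have hdT := hd T.
have hST := Sge T.
have Tpos : 0 < T%:R :> R by rewrite ltr0n.
have hgd : 0 <= g ^+ T * delta 0%N.
  by apply: mulr_ge0 => //; apply: exprn_ge0; lra.
have hdiv : 0 <= g ^+ T / T%:R * delta 0%N.
  by rewrite mulrAC; apply: divr_ge0 => //; exact: ltW.
case: (lerP m N) => hmN; first lra.
have h5 : (m - N) * T%:R <= g ^+ T * delta 0%N.
  have : (m - N) * T%:R <= (m - N) * Ssum g T by rewrite ler_pM2l // subr_gt0.
  lra.
have : m - N <= g ^+ T * delta 0%N / T%:R by rewrite ler_pdivlMr.
rewrite mulrAC; lra.
Qed.
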